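(* Let $V$ be a finite set, $\{C_\alpha\}$ a partition of $V$, and ${\bf t}=(t_i)_{i\in V}$, $\{\lambda_\alpha\}$ complex numbers. Then $$\int\mathcal{D}_{V,{\bf t}}(\psi,\bar\psi)\prod_\alpha f_{C_\alpha}^{(\lambda_\alpha)}=\prod_\alpha\Big(\lambda_\alpha+\sum_{i\in C_\alpha}(t_i-\lambda_\alpha)\Big).$$
   Context: For each $i\in V$ let $\psi_i,\bar\psi_i$ be anticommuting generators of a Grassmann algebra over $\mathbb{C}$; $\tau_A=\prod_{i\in A}\bar\psi_i\psi_i$ ($\tau_\emptyset=1$); $f_A^{(\lambda)}=\lambda(1-|A|)\tau_A+\sum_{i\in A}\tau_{A\setminus\{i\}}-\sum_{i,j\in A,\ i\neq j}\bar\psi_i\psi_j\,\tau_{A\setminus\{i,j\}}$. $\mathcal{D}_{V,{\bf t}}(\psi,\bar\psi)=\prod_{i\in V}d\psi_i\,d\bar\psi_i\,e^{t_i\bar\psi_i\psi_i}$, with Berezin conventions $\int d\psi_i\,d\bar\psi_i\,\bar\psi_i\psi_i=1$ and the integral of $1,\psi_i,\bar\psi_i$ equal to $0$. *)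

(* Defs.v *)
From mathcomp Require Import all_boot all_order all_algebra complex.
From mathcomp Require Import reals.

Set Implicit Arguments.
Unset Strict Implicit.
Unset Printing Implicit Defensive.

Import Order.TTheory GRing.Theory Num.Theory.
Local Open Scope ring_scope.

(* Grassmann algebra over C = R[i] with generators psi_i (= inl i) and
   psibar_i (= inr i), i in V.  An element is its coefficient family on the
   monomials; the monomial attached to S : {set gen V} is the product of the
   generators of S taken in increasing order of [enum_rank]. *)

Section Grassmann.
Variable R : realType.
Variable V : finType.

Definition gen := (V + V)%type.
Definition grass := {ffun {set gen} -> R[i]}.

Definition grank (g : gen) : nat := enum_rank g.

(* sign of reordering  m_A * m_B  into  m_(A :|: B)  (A, B disjoint) *)
Definition msign (A B : {set gen}) : R[i] :=
  (-1) ^+ #|[set p in setX A B | (grank p.2 < grank p.1)%N]|.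

Definition gmul (x y : grass) : grass :=
  [ffun S => \sum_(A : {set gen}) \sum_(B : {set gen})
      (if (A :&: B == set0) && (A :|: B == S) then msign A B * x A * y B
       else 0)].

Definition gconst (c : R[i]) : grass := [ffun S => if S == set0 then c else 0].
Definition gone : grass := gconst 1.
Definition ggen (g : gen) : grass := [ffun S => (S == [set g])%:R].
Definition psi (i : V) : grass := ggen (inl i).
Definition psib (i : V) : grass := ggen (inr i).

Definition gpow (x : grass) (k : nat) : grass := iter k (gmul x) gone.

(* exponential of a Grassmann element without body (nilpotent): the series
   terminates since monomials have degree at most #|gen|. *)
Definition gexp (x : grass) : grass :=
  \sum_(k < #|{: gen}|.+1) (k`!%:R)^-1 *: gpow x k.

(* left derivative d/d g ; Berezin integration  \int d g  is d/d g,
   so that \int dpsi_i dpsibar_i psibar_i psi_i = 1. *)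
Definition dleft (g : gen) (x : grass) : grass :=
  [ffun S : {set gen} => if g \in S then 0
             else (-1) ^+ #|[set a in S | (grank a < grank g)%N]| * x (g |: S)].

(* \int prod_(i in V) dpsi_i dpsibar_i  F  (pairs taken in enum order) *)
Definition berezin (F : grass) : grass :=
  foldr (fun i acc => dleft (inl i) (dleft (inr i) acc)) F (enum V).

Definition tau (A : {set V}) : grass :=
  foldr (fun i acc => gmul (gmul (psib i) (psi i)) acc) gone (enum A).

Definition fA (lam : R[i]) (A : {set V}) : grass :=
  (lam * (1 - (#|A|)%:R)) *: tau A
  + \sum_(i in A) tau (A :\ i)
  - \sum_(i in A) \sum_(j in A | j != i)
       gmul (gmul (psib i) (psi j)) (tau (A :\ i :\ j)).

Definition DInt (t : V -> R[i]) (F : grass) : grass :=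
  berezin (gmul (foldr (fun i acc =>
                    gmul (gexp (t i *: gmul (psib i) (psi i))) acc)
                  gone (enum V)) F).

Definition blockprod (P : {set {set V}}) (lam : {set V} -> R[i]) : grass :=
  foldr (fun C acc => gmul (fA (lam C) C) acc) gone (enum P).

End Grassmann.

(* Main.v *)
Require Import Defs.
From mathcomp Require Import all_boot all_order all_algebra complex.
From mathcomp Require Import reals.
From mathcomp Require Import ring.
Import GRing.Theory.
Local Open Scope ring_scope.

Set Implicit Arguments.
Unset Strict Implicit.
Unset Printing Implicit Defensive.

Section G.
Variable R : realType.
Variable V : finType.

Local Notation gen := (gen V).
Local Notation grass := (grass R V).
Local Notation gmul := (@gmul R V).
Local Notation msign := (@msign R V).

Lemma scale_mul (b c : R[i]) : b *: c = b * c. Proof. by []. Qed.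

Lemma gmulE (x y : grass) S : gmul x y S = \sum_(A : {set gen}) \sum_(B : {set gen})
      (if (A :&: B == set0) && (A :|: B == S) then msign A B * x A * y B else 0).
Proof. by rewrite ffunE. Qed.

Lemma grank_inj : injective (@grank V).
Proof. move=> a b /eqP; rewrite /grank (inj_eq val_inj) => /eqP; exact: enum_rank_inj. Qed.

Lemma gmulDr x y z : gmul x (y + z) = gmul x y + gmul x z.
Proof.
apply/ffunP=> S; rewrite !ffunE -big_split /=; apply: eq_bigr => A _.
rewrite -big_split /=; apply: eq_bigr => B _; rewrite ffunE.
by case: ifP; rewrite ?addr0 // mulrDr.
Qed.

Lemma gmulDl x y z : gmul (y + z) x = gmul y x + gmul z x.
Proof.
apply/ffunP=> S; rewrite !ffunE -big_split /=; apply: eq_bigr => A _.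
rewrite -big_split /=; apply: eq_bigr => B _; rewrite ffunE.
by case: ifP; rewrite ?addr0 // mulrDr mulrDl.
Qed.

Lemma gmulZr a x y : gmul x (a *: y) = a *: gmul x y.
Proof.
apply/ffunP=> S; rewrite [RHS]ffunE !gmulE [in RHS]scale_mul mulr_sumr; apply: eq_bigr => A _.
rewrite mulr_sumr; apply: eq_bigr => B _; rewrite ffunE.
by case: ifP; rewrite ?mulr0 // mulrCA.
Qed.

Lemma gmulZl a x y : gmul (a *: x) y = a *: gmul x y.
Proof.
apply/ffunP=> S; rewrite [RHS]ffunE !gmulE [in RHS]scale_mul mulr_sumr; apply: eq_bigr => A _.
rewrite mulr_sumr; apply: eq_bigr => B _; rewrite ffunE.
by case: ifP; rewrite ?mulr0 // mulrCA !mulrA.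
Qed.

Lemma gmul0r x : gmul x 0 = 0.
Proof. by apply/ffunP=> S; rewrite !ffunE big1 // => A _; rewrite big1 // => B _; rewrite ffunE mulr0 if_same. Qed.

Lemma gmul0l x : gmul 0 x = 0.
Proof. by apply/ffunP=> S; rewrite !ffunE big1 // => A _; rewrite big1 // => B _; rewrite ffunE mulr0 mul0r if_same. Qed.

Lemma gmulNr x y : gmul x (- y) = - gmul x y.
Proof. by rewrite -scaleN1r gmulZr scaleN1r. Qed.

Lemma gmulBr x y z : gmul x (y - z) = gmul x y - gmul x z.
Proof. by rewrite gmulDr gmulNr. Qed.

Lemma gmul_sumr x I (r : seq I) (Pr : pred I) (F : I -> grass) :
  gmul x (\sum_(i <- r | Pr i) F i) = \sum_(i <- r | Pr i) gmul x (F i).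
Proof. exact: (big_morph _ (gmulDr x) (gmul0r x)). Qed.


Lemma card_disjU (T : finType) (X Y : {set T}) : X :&: Y = set0 -> #|X :|: Y| = (#|X| + #|Y|)%N.
Proof. by move=> h; rewrite cardsU h cards0 subn0. Qed.

Lemma msignUl A B C : A :&: B = set0 -> msign (A :|: B) C = msign A C * msign B C.
Proof.
move=> h; rewrite /msign -exprD -card_disjU.
  congr (_ ^+ _); apply: eq_card => -[a c]; rewrite !inE /=.
  by case: (a \in A); case: (a \in B); case: (c \in C); case: (grank c < grank a)%N.
apply/setP=> p; rewrite !inE; case: p => a c /=.
apply/negbTE; apply/negP => /andP[/andP[/andP[aA _] _] /andP[/andP[aB _] _]].
have : a \in A :&: B by rewrite inE aA aB.
by rewrite h inE.
Qed.

Lemma msignUr A B C : B :&: C = set0 -> msign A (B :|: C) = msign A B * msign A C.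
Proof.
move=> h; rewrite /msign -exprD -card_disjU.
  congr (_ ^+ _); apply: eq_card => -[a c]; rewrite !inE /=.
  by case: (c \in B); case: (c \in C); case: (a \in A); case: (grank c < grank a)%N.
apply/setP=> p; rewrite !inE; case: p => a c /=.
apply/negbTE; apply/negP => /andP[/andP[/andP[_ aA] _] /andP[/andP[_ aB] _]].
have : c \in B :&: C by rewrite inE aA aB.
by rewrite h inE.
Qed.

Lemma msign0l B : msign set0 B = 1.
Proof.
rewrite /msign (_ : [set _ in _ | _] = set0) ?cards0 ?expr0 //.
by apply/setP=> p; rewrite !inE; case: p => a b.
Qed.

Lemma msign0r B : msign B set0 = 1.
Proof.
rewrite /msign (_ : [set _ in _ | _] = set0) ?cards0 ?expr0 //.
by apply/setP=> p; rewrite !inE; case: p => a b; rewrite andbF.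
Qed.

Lemma sum_eq1 (T : finType) (j : T) (F : T -> R[i]) :
  \sum_i (if i == j then F i else 0) = F j.
Proof. by rewrite -big_mkcond big_pred1_eq. Qed.

Lemma goneE S : (@gone R V) S = if S == set0 then 1 else 0.
Proof. by rewrite ffunE. Qed.

Lemma gmul1l x : gmul (@gone R V) x = x.
Proof.
apply/ffunP=> S; rewrite gmulE (bigD1 set0) //= [X in _ + X]big1 ?addr0 => [|A HA].
  rewrite -[RHS](sum_eq1 S x); apply: eq_bigr => B _.
  by rewrite set0I set0U eqxx /= msign0l goneE eqxx !mul1r.
by apply: big1 => B _; rewrite goneE (negbTE HA) mulr0 mul0r if_same.
Qed.

Lemma gmul1r x : gmul x (@gone R V) = x.
Proof.
apply/ffunP=> S; rewrite gmulE -[RHS](sum_eq1 S x); apply: eq_bigr => A _.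
rewrite (bigD1 set0) //= [X in _ + X]big1 ?addr0 => [|B HB].
  by rewrite setI0 setU0 eqxx /= msign0r goneE eqxx !mulr1 mul1r.
by rewrite goneE (negbTE HB) mulr0 if_same.
Qed.

Definition tripleN (x y z : grass) S := \sum_(A : {set gen}) \sum_(B : {set gen}) \sum_(C : {set gen})
  (if [&& A :&: B == set0, A :&: C == set0, B :&: C == set0 & A :|: B :|: C == S]
   then msign A B * msign A C * msign B C * x A * y B * z C else 0).

Lemma gmulA_l x y z S : gmul (gmul x y) z S = tripleN x y z S.
Proof.
rewrite gmulE.
transitivity (\sum_(D : {set gen}) \sum_(C : {set gen}) \sum_(A : {set gen}) \sum_(B : {set gen})
  (if ((A :&: B == set0) && (A :|: B == D)) && ((D :&: C == set0) && (D :|: C == S))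
   then msign D C * (msign A B * x A * y B) * z C else 0)).
  apply: eq_bigr => D _; apply: eq_bigr => C _; rewrite gmulE.
  case: ifP => h.
    rewrite mulr_sumr mulr_suml; apply: eq_bigr => A _.
    rewrite mulr_sumr mulr_suml; apply: eq_bigr => B _.
    by rewrite andbT; case: ifP => _; rewrite ?mulr0 ?mul0r.
  by symmetry; apply: big1 => A _; apply: big1 => B _; rewrite andbF.
under eq_bigr => D _ do rewrite exchange_big.
under eq_bigr => D _ do under eq_bigr => A _ do rewrite exchange_big.
rewrite exchange_big.
under eq_bigr => A _ do rewrite exchange_big.
under eq_bigr => A _ do under eq_bigr => B _ do rewrite exchange_big.
rewrite /tripleN; apply: eq_bigr => A _; apply: eq_bigr => B _; apply: eq_bigr => C _.
rewrite (bigD1 (A :|: B)) //= [X in _ + X]big1 ?addr0 => [|D HD]; last first.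
  by rewrite (_ : (A :|: B == D) = false) ?andbF //; apply/negbTE; rewrite eq_sym.
rewrite eqxx andbT setIUl setU_eq0.
case: (A :&: B =P set0) => AB //=; case: (A :&: C =P set0) => AC //=.
case: (B :&: C =P set0) => BC //=; case: (_ == S) => //=.
rewrite msignUl //; set a := msign A B; set b := msign A C; set c := msign B C.
by ring.
Qed.


Lemma gmulA_r x y z S : gmul x (gmul y z) S = tripleN x y z S.
Proof.
rewrite gmulE.
transitivity (\sum_(A : {set gen}) \sum_(E : {set gen}) \sum_(B : {set gen}) \sum_(C : {set gen})
  (if ((B :&: C == set0) && (B :|: C == E)) && ((A :&: E == set0) && (A :|: E == S))
   then msign A E * x A * (msign B C * y B * z C) else 0)).
  apply: eq_bigr => A _; apply: eq_bigr => E _; rewrite gmulE.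
  case: ifP => h.
    rewrite mulr_sumr; apply: eq_bigr => B _.
    rewrite mulr_sumr; apply: eq_bigr => C _.
    by rewrite andbT; case: ifP => _; rewrite ?mulr0 ?mul0r.
  by symmetry; apply: big1 => B _; apply: big1 => C _; rewrite andbF.
under eq_bigr => A _ do rewrite exchange_big.
under eq_bigr => A _ do under eq_bigr => B _ do rewrite exchange_big.
rewrite /tripleN; apply: eq_bigr => A _; apply: eq_bigr => B _; apply: eq_bigr => C _.
rewrite (bigD1 (B :|: C)) //= [X in _ + X]big1 ?addr0 => [|E HE]; last first.
  by rewrite (_ : (B :|: C == E) = false) ?andbF //; apply/negbTE; rewrite eq_sym.
rewrite eqxx andbT setIUr setU_eq0 setUA.
case: (A :&: B =P set0) => AB //=; case: (A :&: C =P set0) => AC //=;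
case: (B :&: C =P set0) => BC //=; case: (_ == S) => //=.
rewrite msignUr //; by ring.
Qed.

Lemma gmulA x y z : gmul x (gmul y z) = gmul (gmul x y) z.
Proof. by apply/ffunP => S; rewrite gmulA_l gmulA_r. Qed.


Lemma sign_sq k : ((-1) ^+ k * (-1) ^+ k : R[i]) = 1.
Proof. by rewrite -exprD addnn -signr_odd odd_double. Qed.

Lemma msign_comm A B : A :&: B = set0 -> ~~ odd #|A| -> msign A B = msign B A.
Proof.
move=> AB eA.
have e1 : msign A B * msign B A = 1.
  rewrite /msign -exprD.
  set P1 := [set p in setX A B | _]; set P2 := [set p in setX B A | _].
  have -> : P2 = (fun p => (p.2, p.1)) @: (setX A B :\: [set p | (grank p.2 < grank p.1)%N]).
    apply/setP => -[b a]; rewrite inE /=; apply/idP/imsetP.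
      case/andP => /[!inE] /andP[bB aA] lt; exists (a, b) => //.
      by rewrite !inE aA bB /= -leqNgt ltnW.
    case=> -[a' b'] /[!inE] /andP[/negP nlt /andP[aA bB]] [-> ->] /=.
    rewrite bB aA /= ltn_neqAle leqNgt; apply/andP; split => //; last by apply/negP.
    apply/negP => /eqP /grank_inj e; have : a' \in A :&: B by rewrite inE aA e bB.
    by rewrite AB inE.
  rewrite card_imset; last by move=> [? ?] [? ?] [-> ->].
  have -> : P1 = setX A B :&: [set p | (grank p.2 < grank p.1)%N].
    by apply/setP => p; rewrite !inE.
  by rewrite cardsID cardsX -signr_odd oddM (negbTE eA).
by rewrite -[LHS]mulr1 -(sign_sq #|[set p in setX B A | (grank p.2 < grank p.1)%N]|) mulrA e1 mul1r.
Qed.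

Definition supp_in (Q : pred {set gen}) (x : grass) := forall S, x S != 0 -> Q S.

Lemma gmul_supp x y S : gmul x y S != 0 ->
  exists A B, [/\ A :&: B = set0, A :|: B = S, x A != 0 & y B != 0].
Proof.
move=> H; case: (boolP [exists A, exists B, [&& A :&: B == set0, A :|: B == S, x A != 0 & y B != 0]]).
  by case/existsP => A /existsP [B /and4P[/eqP h1 /eqP h2 h3 h4]]; exists A, B.
move=> nE; move: H; rewrite gmulE big1 ?eqxx // => A _; apply: big1 => B _.
case: ifP => // /andP[h1 h2].
move/existsPn: nE => /(_ A) /existsPn /(_ B); rewrite h1 h2 /= negb_and !negbK.
by case/orP => /eqP ->; rewrite ?mulr0 ?mul0r.
Qed.

Lemma supp_in_mul (Q1 Q2 Q3 : pred {set gen}) x y :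
  supp_in Q1 x -> supp_in Q2 y ->
  (forall A B, A :&: B = set0 -> Q1 A -> Q2 B -> Q3 (A :|: B)) -> supp_in Q3 (gmul x y).
Proof.
move=> h1 h2 h S /gmul_supp [A [B [AB <- xA yB]]]; exact: h (h1 _ xA) (h2 _ yB).
Qed.

Lemma supp_in0 Q : supp_in Q 0.
Proof. by move=> S; rewrite ffunE eqxx. Qed.

Lemma supp_inD Q x y : supp_in Q x -> supp_in Q y -> supp_in Q (x + y).
Proof.
move=> h1 h2 S; rewrite ffunE; case: (x S =P 0) => [->|/eqP]; first by rewrite add0r; apply: h2.
by move=> /h1.
Qed.

Lemma supp_inZ Q a x : supp_in Q x -> supp_in Q (a *: x).
Proof. by move=> h S; rewrite ffunE scale_mul; case: (x S =P 0) => [->|/eqP /h //]; rewrite mulr0 eqxx. Qed.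

Lemma supp_inN Q x : supp_in Q x -> supp_in Q (- x).
Proof. by move=> h; rewrite -scaleN1r; apply: supp_inZ. Qed.

Lemma supp_inB Q x y : supp_in Q x -> supp_in Q y -> supp_in Q (x - y).
Proof. by move=> h1 h2; apply: supp_inD => //; apply: supp_inN. Qed.

Lemma supp_in_sum Q I (r : seq I) (Pr : pred I) (F : I -> grass) :
  (forall i, Pr i -> supp_in Q (F i)) -> supp_in Q (\sum_(i <- r | Pr i) F i).
Proof.
move=> h; elim/big_rec: _ => [|i z Pi hz]; first exact: supp_in0.
by apply: supp_inD => //; apply: h.
Qed.

Lemma supp_in_sub (Q1 Q2 : pred {set gen}) x : (forall S, Q1 S -> Q2 S) -> supp_in Q1 x -> supp_in Q2 x.
Proof. by move=> h h1 S /h1 /h. Qed.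

Definition even := supp_in (fun S => ~~ odd #|S|).
Definition local (X : {set gen}) := supp_in (fun S => S \subset X).
Definition cov (g : gen) := supp_in (fun S => g \in S).

Lemma even_mul x y : even x -> even y -> even (gmul x y).
Proof.
move=> h1 h2; apply: supp_in_mul h1 h2 _ => A B AB /= eA eB.
by rewrite card_disjU // oddD (negbTE eA) (negbTE eB).
Qed.

Lemma odd_mul x y : supp_in (fun S => odd #|S|) x -> supp_in (fun S => odd #|S|) y -> even (gmul x y).
Proof.
move=> h1 h2; apply: supp_in_mul h1 h2 _ => A B AB /= eA eB.
by rewrite card_disjU // oddD eA eB.
Qed.

Lemma local_mul X Y x y : local X x -> local Y y -> local (X :|: Y) (gmul x y).
Proof. by move=> h1 h2; apply: supp_in_mul h1 h2 _ => A B AB /= sA sB; apply: setUSS. Qed.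

Lemma cov_mull g x y : cov g x -> cov g (gmul x y).
Proof.
move=> h1; apply: (supp_in_mul (Q2 := predT)) h1 _ _ => // A B AB /= gA _.
by rewrite inE gA.
Qed.

Lemma cov_mulr g x y : cov g y -> cov g (gmul x y).
Proof.
move=> h2; apply: (supp_in_mul (Q1 := predT)) _ h2 _ => // A B AB /= _ gB.
by rewrite inE gB orbT.
Qed.

Lemma gmul_cov0 g x y : cov g x -> cov g y -> gmul x y = 0.
Proof.
move=> h1 h2; apply/ffunP => S; rewrite [RHS]ffunE; apply/eqP.
apply: contraT => /gmul_supp [A [B [AB _ /h1 gA /h2 gB]]].
have : g \in A :&: B by rewrite inE gA gB.
by rewrite AB inE.
Qed.

Lemma gmulC x y : even x -> gmul x y = gmul y x.
Proof.
move=> ex; apply/ffunP => S; rewrite !gmulE [RHS]exchange_big /=.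
apply: eq_bigr => A _; apply: eq_bigr => B _.
rewrite setIC setUC; case: ifP => // /andP[/eqP AB _].
case: (eqVneq (x A) 0) => [->|/ex /= eA]; first by rewrite !mulr0 !mul0r.
by rewrite msign_comm; [ring | rewrite setIC | ].
Qed.

Lemma gmul_top X Y x y : X :&: Y = set0 -> local X x -> local Y y ->
  gmul x y (X :|: Y) = msign X Y * x X * y Y.
Proof.
move=> XY hx hy; rewrite gmulE (bigD1 X) //= [X in _ + X]big1 ?addr0 => [|A AX].
  rewrite (bigD1 Y) //= [X in _ + X]big1 ?addr0 => [|B BY]; first by rewrite XY !eqxx.
  case: ifP => // /andP[/eqP XB /eqP XBe].
  case: (eqVneq (y B) 0) => [->|/hy /= sB]; first by rewrite mulr0.
  case/negP: BY; rewrite eqEsubset sB /=; apply/subsetP => b bY.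
  have : b \in X :|: B by rewrite XBe inE bY orbT.
  rewrite inE => /orP[bX|//]; have : b \in X :&: Y by rewrite inE bX bY.
  by rewrite XY inE.
apply: big1 => B _; case: ifP => // /andP[/eqP AB /eqP ABe].
case: (eqVneq (x A) 0) => [->|/hx /= sA]; first by rewrite mulr0 mul0r.
case: (eqVneq (y B) 0) => [->|/hy /= sB]; first by rewrite mulr0.
case/negP: AX; rewrite eqEsubset sA /=; apply/subsetP => a aX.
have : a \in A :|: B by rewrite ABe inE aX.
rewrite inE => /orP[//|aB]; have : a \in X :&: Y by rewrite inE aX (subsetP sB).
by rewrite XY inE.
Qed.


Definition gprod (s : seq grass) := foldr gmul (@gone R V) s.

Lemma gprod_cat s t : gmul (gprod s) (gprod t) = gprod (s ++ t).
Proof. by elim: s => [|x s IH] /=; rewrite ?gmul1l // -gmulA IH. Qed.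

Lemma gmulCA x y z : even x -> gmul y (gmul x z) = gmul x (gmul y z).
Proof. by move=> ex; rewrite !gmulA (gmulC y ex). Qed.

Lemma gprod_mid x t1 t2 : even x -> gprod (t1 ++ x :: t2) = gmul x (gprod (t1 ++ t2)).
Proof. by move=> ex; elim: t1 => [|y t1 IH] //=; rewrite IH gmulCA. Qed.

Lemma gprod_perm s t : {in s, forall x, even x} -> perm_eq s t -> gprod s = gprod t.
Proof.
elim: s t => [|x s IH] t hs.
  by move/perm_size => /esym /size0nil ->.
move=> pst; have xt : x \in t by rewrite -(perm_mem pst) mem_head.
move: pst; case/splitPr: xt => t1 t2 pst.
rewrite gprod_mid; last by apply: hs; rewrite mem_head.
rewrite /= (IH (t1 ++ t2)) // => [y ys|]; first by apply: hs; rewrite inE ys orbT.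
by rewrite -(perm_cons x); apply: (perm_trans pst); rewrite -cat1s perm_catCA.
Qed.

Lemma even_gone : even (@gone R V).
Proof. by move=> S; rewrite goneE; case: ifP => [/eqP -> _|_]; rewrite ?cards0 ?eqxx. Qed.

Lemma even_gprod s : {in s, forall x, even x} -> even (gprod s).
Proof.
elim: s => [|x s IH] hs /=; first exact: even_gone.
apply: even_mul; first by apply: hs; rewrite mem_head.
by apply: IH => y ys; apply: hs; rewrite inE ys orbT.
Qed.

Lemma setUDK' (A S : {set gen}) : A \subset S -> A :|: (S :\: A) = S.
Proof.
move=> AS; apply/setP => a; rewrite !inE; case: (boolP (a \in A)) => //= aA.
by rewrite (subsetP AS).
Qed.

Lemma splitS (A B S : {set gen}) : (A :&: B == set0) && (A :|: B == S) = (A \subset S) && (B == S :\: A).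
Proof.
apply/idP/idP.
  case/andP => /eqP AB /eqP <-; rewrite subsetUl /=; apply/eqP/setP => b.
  rewrite !inE; case: (boolP (b \in B)) => bB; last by rewrite orbF andNb.
  rewrite orbT andbT; symmetry; apply/negP => bA; have : b \in A :&: B by rewrite inE bA bB.
  by rewrite AB inE.
case/andP => AS /eqP ->; apply/andP; split.
  by apply/eqP/setP => b; rewrite !inE; case: (b \in A); rewrite ?andbF.
by rewrite setUDK'.
Qed.

Lemma gmul_sum1 x y S : gmul x y S =
  \sum_(A : {set gen}) (if A \subset S then msign A (S :\: A) * x A * y (S :\: A) else 0).
Proof.
rewrite gmulE; apply: eq_bigr => A _.
under eq_bigr => B _ do rewrite splitS.
case: (A \subset S) => /=; first by rewrite sum_eq1.
by apply: big1.
Qed.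

Definition sgnlt (g : gen) (T : {set gen}) : R[i] :=
  (-1) ^+ #|[set a in T | (grank a < grank g)%N]|.

Lemma sgnltU (g : gen) (A B : {set gen}) : A :&: B = set0 -> sgnlt g (A :|: B) = sgnlt g A * sgnlt g B.
Proof.
move=> AB; rewrite /sgnlt -exprD -card_disjU.
  by congr (_ ^+ _); apply: eq_card => a; rewrite !inE andb_orl.
apply/setP => a; rewrite !inE; apply/negbTE; apply/negP => /andP[/andP[aA _] /andP[aB _]].
have : a \in A :&: B by rewrite inE aA aB.
by rewrite AB inE.
Qed.

Lemma msign_single (A : {set gen}) (g : gen) : g \notin A -> ~~ odd #|A| -> msign A [set g] * sgnlt g A = 1.
Proof.
move=> gA eA; rewrite /msign /sgnlt -exprD.
have -> : [set p in setX A [set g] | (grank p.2 < grank p.1)%N] =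
  (fun a => (a, g)) @: (A :&: [set a | (grank g < grank a)%N]).
  apply/setP => -[a b]; rewrite !inE /=; apply/idP/imsetP.
    by case/andP => /andP[aA /eqP ->] lt; exists a; rewrite // !inE aA.
  by case=> a' /[!inE] /andP[aA lt] [-> ->]; rewrite aA eqxx.
rewrite card_imset; last by move=> ? ? [].
have -> : [set a in A | (grank a < grank g)%N] = A :\: [set a | (grank g < grank a)%N].
  apply/setP => a; rewrite !inE; case: (boolP (a \in A)) => aA; rewrite ?andbF //.
  rewrite andbT -leqNgt [RHS]leq_eqVlt; case: eqP => //= /grank_inj e.
  by move: gA; rewrite -e aA.
by rewrite cardsID -signr_odd (negbTE eA).
Qed.

Lemma dleft_mul g X x y : even x -> local X x -> g \notin X ->
  dleft g (gmul x y) = gmul x (dleft g y).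
Proof.
move=> ex lx gX; apply/ffunP => S; rewrite [LHS]ffunE [RHS]gmul_sum1.
have gA A : x A != 0 -> g \notin A.
  by move=> /lx /= AX; apply: contra gX; apply: (subsetP AX).
case: (boolP (g \in S)) => gS.
  symmetry; apply: big1 => A _; case: ifP => // AS; rewrite ffunE.
  case: (eqVneq (x A) 0) => [->|/gA nA]; first by rewrite mulr0 mul0r.
  by rewrite inE gS nA mulr0.
rewrite gmul_sum1 mulr_sumr; apply: eq_bigr => A _.
case: (eqVneq (x A) 0) => [->|xA]; first by rewrite !mulr0 !mul0r !if_same mulr0.
have nA := gA _ xA; have eA := ex _ xA.
have -> : (A \subset g |: S) = (A \subset S).
  apply/idP/idP => AS; last by apply: (subset_trans AS); apply: subsetUr.
  apply/subsetP => a aA; have := subsetP AS a aA; rewrite !inE => /orP[/eqP ea|//].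
  by move: nA; rewrite -ea aA.
case: ifP => AS; last by rewrite mulr0.
have -> : (g |: S) :\: A = g |: (S :\: A).
  apply/setP => a; rewrite !inE; case: eqP => [->|] //=; by rewrite nA.
rewrite [dleft _ _ _]ffunE !inE (negbTE gS) andbF /=.
rewrite -/(sgnlt g S) -/(sgnlt g (S :\: A)).
rewrite msignUr; last first.
  apply/setP => a; rewrite !inE; case: (eqVneq a g) => [->|]; rewrite ?(negbTE gS) ?andbF //.
have -> : sgnlt g S = sgnlt g A * sgnlt g (S :\: A).
  rewrite -sgnltU ?setUDK' //; apply/setP => a; rewrite !inE.
  by case: (a \in A); rewrite ?andbF.
have h := msign_single nA eA.
transitivity ((msign A [set g] * sgnlt g A) * (msign A (S :\: A) * x A * (sgnlt g (S :\: A) * y (g |: (S :\: A))))); first by ring.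
by rewrite h mul1r.
Qed.


Lemma local0 (X : {set gen}) x (S : {set gen}) : local X x -> ~~ (S \subset X) -> x S = 0.
Proof. by move=> h nS; apply/eqP; apply: contraNT nS => /h. Qed.

Lemma cov0 (g : gen) x (S : {set gen}) : cov g x -> g \notin S -> x S = 0.
Proof. by move=> h nS; apply/eqP; apply: contraNT nS => /h. Qed.

Lemma card_sing_filter (T : finType) (b : T) (Pp : pred T) :
  #|[set a in [set b] | Pp a]| = Pp b.
Proof.
case: (boolP (Pp b)) => Pb.
  rewrite (_ : [set a in _ | _] = [set b]) ?cards1 //.
  by apply/setP => a; rewrite !inE; case: eqP => // ->.
rewrite (_ : [set a in _ | _] = set0) ?cards0 //.
by apply/setP => a; rewrite !inE; case: eqP => // ->; rewrite (negbTE Pb).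
Qed.

Lemma ggenE g S : (@ggen R V g) S = (S == [set g])%:R.
Proof. by rewrite ffunE. Qed.

Lemma ggen_odd g : supp_in (fun S => odd #|S|) (@ggen R V g).
Proof. by move=> S; rewrite ggenE; case: (eqVneq S [set g]) => [->|_] /=; rewrite ?cards1 ?eqxx. Qed.

Lemma ggen_local g : local [set g] (@ggen R V g).
Proof. by move=> S; rewrite ggenE; case: (eqVneq S [set g]) => [->|_] /=; rewrite ?eqxx. Qed.

Lemma ggen_cov g : cov g (@ggen R V g).
Proof. by move=> S; rewrite ggenE; case: (eqVneq S [set g]) => [->|_] /=; rewrite ?eqxx ?inE. Qed.

Definition tau1 (v : V) := gmul (@psib R V v) (@psi R V v).

Lemma tau1_even v : even (tau1 v).
Proof. rewrite /tau1 /psib /psi; exact: (odd_mul (@ggen_odd (inr v)) (@ggen_odd (inl v))). Qed.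
Lemma tau1_local v : local ([set inr v] :|: [set inl v]) (tau1 v).
Proof. rewrite /tau1 /psib /psi; exact: local_mul (@ggen_local (inr v)) (@ggen_local (inl v)). Qed.

Lemma tau1_covr v : cov (inr v) (tau1 v).
Proof. rewrite /tau1 /psib /psi; exact: cov_mull _ (@ggen_cov (inr v)). Qed.

Lemma tau1_covl v : cov (inl v) (tau1 v).
Proof. rewrite /tau1 /psib /psi; exact: cov_mulr _ (@ggen_cov (inl v)). Qed.

Lemma inl_inr (u v : V) : (inl u == inr v :> gen) = false.
Proof. by []. Qed.

Lemma inr_inl (u v : V) : (inr u == inl v :> gen) = false.
Proof. by []. Qed.

Lemma inl_inl (u v : V) : (inl u == inl v :> gen) = (u == v).
Proof. by []. Qed.

Lemma inr_inr (u v : V) : (inr u == inr v :> gen) = (u == v).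
Proof. by []. Qed.

Lemma ddtau v : dleft (inl v) (dleft (inr v) (tau1 v)) = @gone R V.
Proof.
apply/ffunP => S; rewrite goneE ffunE.
case: (boolP (inl v \in S)) => lS.
  case: eqP => // S0; by move: lS; rewrite S0 inE.
rewrite ffunE in_setU1 /=.
case: (boolP (inr v \in S)) => rS.
  rewrite mulr0; case: eqP => // S0; by move: rS; rewrite S0 inE.
case: eqP => [S0|/eqP SN].
  rewrite S0 /sgnlt (_ : [set a in set0 | _] = set0); last by apply/setP => a; rewrite !inE.
  rewrite cards0 expr0 mul1r setU0 card_sing_filter /tau1 /=.
  rewrite (gmul_top (X := [set inr v]) (Y := [set inl v])); try exact: ggen_local; last first.
    by apply/setP => a; rewrite !inE; case: eqP => // ->.
  rewrite /psib /psi !ggenE !eqxx !mulr1 /msign.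
  have -> : [set p in setX [set inr v] [set inl v] | (grank p.2 < grank p.1)%N] =
    [set p in [set (inr v, inl v) : gen * gen] | (grank p.2 < grank p.1)%N].
    by apply/setP => -[a b]; rewrite !inE.
  by rewrite card_sing_filter /= sign_sq.
rewrite (@local0 _ _ (inr v |: (inl v |: S)) (@tau1_local v)) ?mulr0 //.
case/set0Pn: SN => a aS; apply/negP => /subsetP /(_ a).
rewrite !inE aS !orbT => /(_ isT) /orP[] /eqP e; by move: aS; rewrite e ?(negbTE rS) ?(negbTE lS).
Qed.


Definition bfun (i : V) (acc : grass) := dleft (inl i) (dleft (inr i) acc).

Lemma foldr_tau s X x : uniq s -> even x -> local X x ->
  (forall u, u \in s -> (inl u \notin X) && (inr u \notin X)) ->
  foldr bfun (gmul x (gprod (map tau1 s))) s = x.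
Proof.
elim: s X x => [|v s IH] X x /=; first by rewrite gmul1r.
case/andP => vs us ex lx hX.
have /andP[lX rX] := hX v (mem_head _ _).
rewrite gmulA (IH (X :|: ([set inr v] :|: [set inl v])) (gmul x (tau1 v))) //.
- by rewrite /bfun (dleft_mul _ ex lx rX) (dleft_mul _ ex lx lX) ddtau gmul1r.
- exact: even_mul ex (@tau1_even v).
- exact: local_mul lx (@tau1_local v).
move=> u us'; have : u \in v :: s by rewrite inE us' orbT.
move/hX => /andP[lu ru].
have uv : (u == v) = false by apply/negbTE; apply: contraNneq vs => <-.
by rewrite !inE inl_inl inr_inr inr_inl (negbTE lu) (negbTE ru) uv.
Qed.

Lemma berezin_tau : berezin (gprod (map tau1 (enum V))) = @gone R V.
Proof.
rewrite /berezin -[gprod _]gmul1l (@foldr_tau _ set0) //.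
- exact: enum_uniq.
- exact: even_gone.
- by move=> S; rewrite goneE; case: ifP => [/eqP -> _|_]; rewrite ?sub0set ?eqxx.
by move=> u _; rewrite !inE.
Qed.

Definition gv (g : gen) : V := match g with inl i => i | inr i => i end.
Definition gensL (s : seq V) : {set gen} := [set g | gv g \in s].

Lemma foldr_const s : uniq s -> exists c : {set gen} -> R[i], forall F S,
  foldr bfun F s S = if S :&: gensL s == set0 then c S * F (S :|: gensL s) else 0.
Proof.
elim: s => [|v s IH] /=.
  exists (fun _ => 1) => F S; have -> : gensL [::] = set0 by apply/setP => g; rewrite !inE.
  by rewrite setI0 eqxx mul1r setU0.
case/andP => vs us; have [c hc] := IH us.
exists (fun S => sgnlt (inl v) S * sgnlt (inr v) (inl v |: S) * c (inr v |: (inl v |: S))) => F S.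
rewrite /bfun ffunE.
case: (boolP (inl v \in S)) => lS.
  case: eqP => // e; have : inl v \in S :&: gensL (v :: s) by rewrite !inE lS /= eqxx.
  by rewrite e inE.
rewrite ffunE in_setU1 /=.
case: (boolP (inr v \in S)) => rS.
  rewrite mulr0; case: eqP => // e; have : inr v \in S :&: gensL (v :: s) by rewrite !inE rS /= eqxx.
  by rewrite e inE.
rewrite hc.
have vF u : u \in s -> (u == v) = false by move=> us'; apply/negbTE; apply: contraNneq vs => <-.
have -> : (inr v |: (inl v |: S)) :&: gensL s = S :&: gensL (v :: s).
  apply/setP => -[u|u]; rewrite !inE ?inl_inl ?inr_inr ?inl_inr ?inr_inl /=.
    case: (eqVneq u v) => [->|]; first by rewrite (negbTE lS) (negbTE vs) andbF.
    by [].
  case: (eqVneq u v) => [->|]; first by rewrite (negbTE rS) (negbTE vs) andbF.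
  by [].
have -> : (inr v |: (inl v |: S)) :|: gensL s = S :|: gensL (v :: s).
  apply/setP => -[u|u]; rewrite !inE ?inl_inl ?inr_inr ?inl_inr ?inr_inl /=.
    by case: (eqVneq u v) => [->|] /=; rewrite ?orbT //= orbF.
  by case: (eqVneq u v) => [->|] /=; rewrite ?orbT //= orbF.
case: ifP => _; last by rewrite !mulr0.
by rewrite /sgnlt; ring.
Qed.

Lemma berezinE : exists c : R[i], forall F, berezin F = @gconst R V (c * F setT).
Proof.
have [c hc] := @foldr_const (enum V) (enum_uniq _).
have gT : gensL (enum V) = setT by apply/setP => g; rewrite !inE mem_enum.
exists (c set0) => F; apply/ffunP => S; rewrite /berezin.
rewrite (_ : foldr _ F (enum V) = foldr bfun F (enum V)) // hc gT setIT setUT ffunE.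
by case: eqP => [->|].
Qed.


Lemma gaddE (x y : grass) S : (x + y) S = x S + y S. Proof. by rewrite ffunE. Qed.
Lemma goppE (x : grass) S : (- x) S = - x S. Proof. by rewrite ffunE. Qed.
Lemma gsubE (x y : grass) S : (x - y) S = x S - y S. Proof. by rewrite gaddE goppE. Qed.
Lemma gscaleE a (x : grass) S : (a *: x) S = a * x S. Proof. by rewrite ffunE. Qed.

Lemma gpow_nil x : gmul x x = 0 -> forall k, (1 < k)%N -> gpow x k = 0.
Proof.
move=> xx [|[|k]] // _.
by rewrite /gpow iterS iterS gmulA xx gmul0l.
Qed.

Definition ee (t : V -> R[i]) (v : V) := @gone R V + t v *: tau1 v.

Lemma gexp_tau (t : V -> R[i]) v : gexp (t v *: tau1 v) = ee t v.
Proof.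
have xx : gmul (t v *: tau1 v) (t v *: tau1 v) = 0.
  by rewrite gmulZl gmulZr (gmul_cov0 (@tau1_covr v) (@tau1_covr v)) !scaler0.
rewrite /gexp.
have : (0 < #|{: gen}|)%N by apply/card_gt0P; exists (inl v).
case: #|{: gen}| => [//|n] _.
rewrite big_ord_recl big_ord_recl big1 ?addr0 => [|i _]; last first.
  by rewrite gpow_nil ?scaler0.
by rewrite /= /gpow /= gmul1r !fact0 invr1 !scale1r.
Qed.

Lemma ee_even t v : even (ee t v).
Proof. by apply: supp_inD; [exact: even_gone | apply: supp_inZ; exact: tau1_even]. Qed.

Lemma ee_absorb t k z : cov (inl k) z \/ cov (inr k) z -> gmul (ee t k) z = z.
Proof.
move=> h; rewrite /ee gmulDl gmul1l gmulZl.
rewrite (_ : gmul (tau1 k) z = 0) ?scaler0 ?addr0 //.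
by case: h => h; [exact: gmul_cov0 (@tau1_covl k) h | exact: gmul_cov0 (@tau1_covr k) h].
Qed.

Lemma absorb_list t s z : (forall k, k \in s -> cov (inl k) z \/ cov (inr k) z) ->
  gmul (gprod (map (ee t) s)) z = z.
Proof.
elim: s => [|k s IH] h /=; first by rewrite gmul1l.
rewrite -gmulA IH ?ee_absorb //; first by apply: h; rewrite mem_head.
by move=> u us; apply: h; rewrite inE us orbT.
Qed.

Lemma cov_gprod g x s : x \in s -> cov g x -> cov g (gprod s).
Proof.
elim: s => [//|y s IH] /=; rewrite inE => /orP[/eqP <- h|xs h].
  exact: cov_mull.
exact: cov_mulr (IH xs h).
Qed.

Lemma local_gprod X s : (forall x, x \in s -> local X x) -> local X (gprod s).
Proof.
elim: s => [|y s IH] h /=.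
  by move=> S; rewrite goneE; case: ifP => [/eqP -> _|_]; rewrite ?sub0set ?eqxx.
rewrite -[X]setUid; apply: local_mul; first by apply: h; rewrite mem_head.
by apply: IH => x xs; apply: h; rewrite inE xs orbT.
Qed.

Definition gensS (C : {set V}) : {set gen} := [set g | gv g \in C].
Definition tauC (C : {set V}) := gprod (map tau1 (enum C)).

Lemma tauE (C : {set V}) : tau R C = tauC C.
Proof. by rewrite /tau /tauC /gprod foldr_map. Qed.

Lemma tau1_localS k (D : {set V}) : k \in D -> local (gensS D) (tau1 k).
Proof.
move=> kD; apply: supp_in_sub (@tau1_local k) => S /= /subset_trans; apply.
by apply/subsetP => g; rewrite !inE => /orP[] /eqP ->.
Qed.

Lemma tauC_local (D : {set V}) : local (gensS D) (tauC D).
Proof.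
apply: local_gprod => x /mapP [k]; rewrite mem_enum => kD ->; exact: tau1_localS.
Qed.

Lemma tauC_cov k (D : {set V}) : k \in D -> cov (inr k) (tauC D).
Proof.
move=> kD; apply: (@cov_gprod _ (tau1 k)); last exact: tau1_covr.
by apply: map_f; rewrite mem_enum.
Qed.

Lemma enumD1 (C : {set V}) i : i \in C -> perm_eq (enum C) (i :: enum (C :\ i)).
Proof.
move=> iC; apply: uniq_perm; first exact: enum_uniq.
  by rewrite /= mem_enum !inE eqxx /= enum_uniq.
by move=> k; rewrite inE !mem_enum !inE; case: eqP => [->|].
Qed.

Lemma EC_tauC t (C : {set V}) : gmul (gprod (map (ee t) (enum C))) (tauC C) = tauC C.
Proof. by apply: absorb_list => k; rewrite mem_enum => kC; right; apply: tauC_cov. Qed.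

Lemma EC_tauCi t (C : {set V}) i : i \in C ->
  gmul (gprod (map (ee t) (enum C))) (tauC (C :\ i)) = tauC (C :\ i) + t i *: tauC C.
Proof.
move=> iC.
rewrite (@gprod_perm _ (map (ee t) (i :: enum (C :\ i)))); last first.
- by apply: perm_map; apply: enumD1.
- by move=> x /mapP [k _ ->]; apply: ee_even.
rewrite /= -gmulA absorb_list; last first.
  by move=> k; rewrite mem_enum => kC; right; apply: tauC_cov.
rewrite /ee gmulDl gmul1l gmulZl; congr (_ + _ *: _).
rewrite /tauC (@gprod_perm (map tau1 (enum C)) (map tau1 (i :: enum (C :\ i)))) //.
- by move=> x /mapP [k _ ->]; apply: tau1_even.
- by apply: perm_map; apply: enumD1.
Qed.

Definition rho (i j : V) := gmul (@psib R V i) (@psi R V j).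

Lemma EC_rho t (C : {set V}) i j : i \in C -> j \in C -> j != i ->
  gmul (gprod (map (ee t) (enum C))) (gmul (rho i j) (tauC (C :\ i :\ j))) =
  gmul (rho i j) (tauC (C :\ i :\ j)).
Proof.
move=> iC jC ji; apply: absorb_list => k; rewrite mem_enum => kC.
case: (eqVneq k i) => [->|ki].
  by right; apply: cov_mull; apply: cov_mull; apply: ggen_cov.
case: (eqVneq k j) => [->|kj].
  by left; apply: cov_mull; apply: cov_mulr; apply: ggen_cov.
by right; apply: cov_mulr; apply: tauC_cov; rewrite !inE ki kj.
Qed.


Lemma fA_E (lam : R[i]) (C : {set V}) : fA lam C =
  (lam * (1 - (#|C|)%:R)) *: tauC C + \sum_(i in C) tauC (C :\ i)
  - \sum_(i in C) \sum_(j in C | j != i) gmul (rho i j) (tauC (C :\ i :\ j)).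
Proof.
rewrite /fA tauE; congr (_ + _ - _); first by apply: eq_bigr => i _; rewrite tauE.
by apply: eq_bigr => i _; apply: eq_bigr => j _; rewrite tauE.
Qed.

Lemma h_top t (lam : R[i]) (C : {set V}) :
  gmul (gprod (map (ee t) (enum C))) (fA lam C) (gensS C) =
  (lam * (1 - (#|C|)%:R) + \sum_(i in C) t i) * tauC C (gensS C).
Proof.
rewrite fA_E gmulBr gmulDr gmulZr !gmul_sumr EC_tauC.
under eq_bigr => i iC do rewrite (EC_tauCi _ iC).
under [X in _ - X]eq_bigr => i iC do rewrite gmul_sumr.
under [X in _ - X]eq_bigr => i iC do under eq_bigr => j /andP[jC ji] do rewrite (EC_rho _ iC jC ji).
rewrite gsubE gaddE gscaleE !sum_ffunE.
rewrite [X in _ - X]big1 ?subr0 => [|i iC]; last first.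
  rewrite sum_ffunE big1 // => j /andP[jC ji].
  apply: (@local0 ((([set inr i] :|: [set inl j]) :|: gensS (C :\ i :\ j)))).
    apply: local_mul; last exact: tauC_local.
    exact: local_mul (@ggen_local (inr i)) (@ggen_local (inl j)).
  apply/negP => /subsetP sub; have := sub (inl i); rewrite !inE /= iC inl_inl.
  by rewrite eq_sym (negbTE ji) eqxx /= => /(_ isT).
under eq_bigr => i iC.
  have z : tauC (C :\ i) (gensS C) = 0.
    apply: (@local0 (gensS (C :\ i))); first exact: tauC_local.
    by apply/negP => /subsetP sub; have := sub (inl i); rewrite !inE /= iC eqxx /= => /(_ isT).
  rewrite gaddE gscaleE z add0r.
  over.
by rewrite -mulr_suml mulrDl.
Qed.


Lemma tauC_even (D : {set V}) : even (tauC D).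
Proof. by apply: even_gprod => x /mapP [k _ ->]; apply: tau1_even. Qed.

Lemma rho_even i j : even (rho i j).
Proof. exact: (odd_mul (@ggen_odd (inr i)) (@ggen_odd (inl j))). Qed.

Lemma fA_even lam (C : {set V}) : even (fA lam C).
Proof.
rewrite fA_E; apply: supp_inB; first apply: supp_inD.
- apply: supp_inZ; exact: tauC_even.
- by apply: supp_in_sum => i _; apply: tauC_even.
- apply: supp_in_sum => i _; apply: supp_in_sum => j _.
  by apply: even_mul; [exact: rho_even | exact: tauC_even].
Qed.

Lemma gensS_sub (C D : {set V}) : C \subset D -> gensS C \subset gensS D.
Proof. by move=> CD; apply/subsetP => g; rewrite !inE => /(subsetP CD). Qed.

Lemma local_sub (X Y : {set gen}) x : X \subset Y -> local X x -> local Y x.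
Proof. by move=> XY; apply: supp_in_sub => S /= /subset_trans; apply. Qed.

Lemma fA_local lam (C : {set V}) : local (gensS C) (fA lam C).
Proof.
rewrite fA_E; apply: supp_inB; first apply: supp_inD.
- apply: supp_inZ; exact: tauC_local.
- apply: supp_in_sum => i _; apply: local_sub (@tauC_local _).
  by apply: gensS_sub; apply: subD1set.
- apply: supp_in_sum => i iC; apply: supp_in_sum => j /andP[jC _].
  rewrite -[gensS C]setUid; apply: local_mul.
    apply: local_sub (local_mul (@ggen_local (inr i)) (@ggen_local (inl j))).
    by apply/subsetP => g; rewrite !inE => /orP[] /eqP -> /=.
  apply: local_sub (@tauC_local _); apply: gensS_sub.
  by apply/subsetP => k; rewrite !inE => /and3P[].
Qed.

Lemma ee_local t (C : {set V}) i : i \in C -> local (gensS C) (ee t i).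
Proof.
move=> iC; apply: supp_inD; last by apply: supp_inZ; apply: tau1_localS.
by move=> S; rewrite goneE; case: ifP => [/eqP -> _|_]; rewrite ?sub0set ?eqxx.
Qed.

Definition unionL (L : seq {set V}) : {set V} := foldr (@setU V) set0 L.

Lemma mem_unionL (v : V) (L : seq {set V}) : (v \in unionL L) = has (fun C : {set V} => v \in C) L.
Proof. by elim: L => [|C L IH] /=; rewrite ?inE // IH. Qed.

Lemma gensSU (C D : {set V}) : gensS (C :|: D) = gensS C :|: gensS D.
Proof. by apply/setP => g; rewrite !inE. Qed.

Lemma gensSI0 (C D : {set V}) : C :&: D = set0 -> gensS C :&: gensS D = set0.
Proof.
move=> h; apply/setP => g; rewrite !inE; apply/negbTE/negP => /andP[gC gD].
have : gv g \in C :&: D by rewrite inE gC gD.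
by rewrite h inE.
Qed.

Definition pdisj (L : seq {set V}) :=
  forall C D, C \in L -> D \in L -> C != D -> C :&: D = set0.

Lemma pdisj_behead C L : pdisj (C :: L) -> pdisj L.
Proof. by move=> pd C1 D1 h1 h2; apply: pd; rewrite inE ?h1 ?h2 orbT. Qed.

Lemma disj_unionL C L : C \notin L -> pdisj (C :: L) -> C :&: unionL L = set0.
Proof.
move=> CL pd; apply/setP => v; rewrite !inE mem_unionL; apply/negbTE/negP.
case/andP => vC /hasP [D DL vD].
have CD : C != D by apply: contraNneq CL => ->.
have DL' : D \in C :: L by rewrite inE DL orbT.
have := pd C D (mem_head _ _) DL' CD.
by move/setP /(_ v); rewrite !inE vC vD.
Qed.

Lemma top_prod L (x y : {set V} -> grass) (a : {set V} -> R[i]) :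
  uniq L -> pdisj L ->
  (forall C, C \in L -> [/\ local (gensS C) (x C), local (gensS C) (y C)
                         & x C (gensS C) = a C * y C (gensS C)]) ->
  gprod (map x L) (gensS (unionL L)) = (\prod_(C <- L) a C) * gprod (map y L) (gensS (unionL L)).
Proof.
elim: L => [|C L IH] /= uL pd h; first by rewrite big_nil mul1r.
case/andP: uL => CL uL.
have pdL := pdisj_behead pd.
have [lxC lyC eC] := h C (mem_head _ _).
have dis : gensS C :&: gensS (unionL L) = set0 := gensSI0 (disj_unionL CL pd).
have locL (z : {set V} -> grass) : (forall D, D \in L -> local (gensS D) (z D)) ->
    local (gensS (unionL L)) (gprod (map z L)).
  move=> hz; apply: local_gprod => w /mapP [D DL ->]; apply: local_sub (hz D DL).
  apply/subsetP => g; rewrite !inE mem_unionL => gD; apply/hasP; by exists D.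
have hL D : D \in L -> [/\ local (gensS D) (x D), local (gensS D) (y D)
                         & x D (gensS D) = a D * y D (gensS D)].
  by move=> DL; apply: h; rewrite inE DL orbT.
rewrite gensSU big_cons !(gmul_top dis) //; last first.
- by apply: locL => D /hL [].
- by apply: locL => D /hL [].
rewrite eC IH //; ring.
Qed.

Lemma gprod_flatten (LL : seq (seq grass)) : gprod (flatten LL) = gprod (map gprod LL).
Proof. by elim: LL => [|l LL IH] //=; rewrite -gprod_cat IH. Qed.

Lemma mem_flat_enum (v : V) (L : seq {set V}) : (v \in flatten [seq enum C | C : {set V} <- L]) = has (fun C : {set V} => v \in C) L.
Proof. by elim: L => //= C L IH; rewrite mem_cat mem_enum IH. Qed.

Lemma uniq_flat_enum (L : seq {set V}) : uniq L -> pdisj L -> uniq (flatten [seq enum C | C : {set V} <- L]).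
Proof.
elim: L => //= C L IH /andP[CL uL] pd; rewrite cat_uniq enum_uniq IH ?andbT //; last first.
  exact: pdisj_behead pd.
apply/hasPn => v; rewrite mem_flat_enum => /hasP [D DL vD]; apply/negP; rewrite mem_enum => vC.
have CD : C != D by apply: contraNneq CL => ->.
have DL' : D \in C :: L by rewrite inE DL orbT.
have := pd C D (mem_head _ _) DL' CD.
by move/setP /(_ v); rewrite !inE vC vD.
Qed.

Lemma perm_flat (g : {set V} -> seq grass) (k : {set V} -> grass) (L : seq {set V}) :
  perm_eq (flatten [seq g C ++ [:: k C] | C <- L]) (flatten [seq g C | C <- L] ++ map k L).
Proof.
elim: L => //= C L IH.
rewrite -!catA perm_cat2l /= perm_sym -cat1s perm_catCA /= perm_cons perm_sym //.
Qed.


Lemma main (P : {set {set V}}) (t : V -> R[i]) (lam : {set V} -> R[i]) :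
  partition P [set: V] ->
  DInt t (blockprod P lam) =
  @gconst R V (\prod_(C in P) (lam C + \sum_(i in C) (t i - lam C))).
Proof.
case/and3P => /eqP covP trivP _.
have pdP : pdisj (enum P).
  move=> C D; rewrite !mem_enum => CP DP CD; apply/eqP; rewrite setI_eq0.
  by move/trivIsetP: trivP; apply.
have allP (v : V) : has (fun C : {set V} => v \in C) (enum P).
  have : v \in cover P by rewrite covP inE.
  by case/bigcupP => C CP vC; apply/hasP; exists C; rewrite ?mem_enum.
have permV : perm_eq (enum V) (flatten [seq enum C | C : {set V} <- enum P]).
  apply: uniq_perm; first exact: enum_uniq.
    by apply: uniq_flat_enum => //; exact: enum_uniq.
  by move=> v; rewrite mem_flat_enum allP mem_enum.
have [c hc] := berezinE.
have hc1 : c * gprod (map tau1 (enum V)) setT = 1.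
  by have := berezin_tau; rewrite hc => /ffunP /(_ set0); rewrite !ffunE eqxx.
rewrite /DInt.
have -> : foldr (fun i acc => gmul (gexp (t i *: gmul (@psib R V i) (@psi R V i))) acc) (@gone R V) (enum V)
    = gprod (map (ee t) (enum V)).
  rewrite /gprod foldr_map enumT.
  elim: (Finite.enum V) => //= i s ->; by rewrite -gexp_tau.
have -> : blockprod P lam = gprod (map (fun C => fA (lam C) C) (enum P)).
  by rewrite /blockprod /gprod foldr_map.
rewrite gprod_cat hc.
set h := fun C : {set V} => gmul (gprod (map (ee t) (enum C))) (fA (lam C) C).
have -> : gprod (map (ee t) (enum V) ++ map (fun C => fA (lam C) C) (enum P)) = gprod (map h (enum P)).
  rewrite (@gprod_perm _ (flatten [seq map (ee t) (enum C) ++ [:: fA (lam C) C] | C : {set V} <- enum P])).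
  - rewrite gprod_flatten -map_comp; congr gprod; apply: eq_map => C /=.
    by rewrite -gprod_cat /= gmul1r.
  - move=> x; rewrite mem_cat => /orP[] /mapP [y _ ->]; [exact: ee_even | exact: fA_even].
  rewrite perm_sym; apply: perm_trans (perm_flat _ _ _) _; rewrite perm_cat2r.
  rewrite [X in perm_eq X _](_ : _ = map (ee t) (flatten [seq enum C | C : {set V} <- enum P])).
    by apply: perm_map; rewrite perm_sym.
  by rewrite map_flatten -map_comp.
have Gset : gensS (unionL (enum P)) = setT.
  by apply/setP => g; rewrite !inE mem_unionL allP.
rewrite -Gset (@top_prod _ h tauC (fun C => lam C * (1 - (#|C|)%:R) + \sum_(i in C) t i)); last first.
- move=> C CP; split.
  + rewrite /h -[gensS C]setUid; apply: local_mul; last exact: fA_local.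
    apply: local_gprod => x xs; case/mapP: xs => i iC ->.
    by apply: ee_local; move: iC; rewrite mem_enum.
  + exact: tauC_local.
  + exact: h_top.
- exact: pdP.
- exact: enum_uniq.
have -> : gprod (map tauC (enum P)) = gprod (map tau1 (enum V)).
  rewrite (@gprod_perm (map tau1 (enum V)) (map tau1 (flatten [seq enum C | C : {set V} <- enum P]))); last first.
  - exact: perm_map.
  - by move=> x /mapP [k _ ->]; apply: tau1_even.
  by rewrite map_flatten gprod_flatten -!map_comp.
rewrite Gset mulrCA hc1 mulr1 big_enum; congr gconst; apply: eq_bigr => C _.
rewrite sumrB sumr_const mulrBr mulr1 mulr_natr; ring.
Qed.

End G.

Unset Implicit Arguments.

Theorem corollary5p3 (R : realType) (V : finType) (P : {set {set V}})
    (t : V -> R[i]) (lam : {set V} -> R[i]) :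
  partition P [set: V] ->
  DInt t (blockprod P lam) =
  @gconst R V (\prod_(C in P) (lam C + \sum_(i in C) (t i - lam C))).
Proof. exact: main. Qed.
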